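(* Let $Q$ be a sketch with $d$ parameter holes, $z$ a trajectory, $v\in\mathbb{R}^d$, and $u\in\mathbb{R}^d_{>0}$ (all components positive). Let $t=[\![Q]\!]^{q}_{v,u}(z)\in\mathbb{R}\cup\{\pm\infty\}$. Then $t\cdot u+v$ is a boundary parameter of $z$ for $Q$, where by convention $\infty\cdot u+v:=\top$ and $(-\infty)\cdot u+v:=\bot$.
   Context: Fix a set $\mathcal{X}$ of states. A trajectory is a finite sequence $z=(x_0,\dots,x_{n-1})\in\mathcal{X}^*$ of length $n$; for $0\le i\le j\le n$, $z_{i:j}=(x_i,\dots,x_{j-1})$ (empty if $i=j$). Fix predicates of two kinds: a non-parametric predicate $\varphi$ has $\mathsf{sat}_\varphi:\mathcal{X}^*\to\{0,1\}$; a parametric predicate $\varphi$ has a bounded scoring function $\iota_\varphi:\mathcal{X}^*\to\mathbb{R}$. Sketches are generated by $Q::=\varphi_{??i}\mid\varphi\mid Q\,;\,Q\mid Q^k\mid Q\wedge Q$, where $\varphi_{??i}$ is a parametric predicate with a parameter hole labelled $i\in\{1,\dots,d\}$ ($d$ = number of parameter holes), $\varphi$ in the second case is non-parametric, and $Q^k$ ($k\ge1$) is $k$-fold sequencing $Q\,;\cdots;\,Q$. For $\theta\in\mathbb{R}^d$, $Q_\theta$ fills hole $??i$ with $\theta_i$, with Boolean semantics on $z$ of length $n$: $[\![\varphi_{\theta_i}]\!](z)=\mathbb{1}(\iota_\varphi(z)\ge\theta_i)$; $[\![\varphi]\!](z)=\mathsf{sat}_\varphi(z)$; $[\![Q_1\wedge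 Q_2]\!](z)=[\![Q_1]\!](z)\wedge[\![Q_2]\!](z)$; $[\![Q_1\,;\,Q_2]\!](z)=\bigvee_{k=0}^{n}([\![Q_1]\!](z_{0:k})\wedge[\![Q_2]\!](z_{k:n}))$. Quantitative semantics (values in $\mathbb{R}\cup\{\pm\infty\}$), for $v\in\mathbb{R}^d$, $u\in\mathbb{R}^d_{>0}$ and $z$ of length $n$: $[\![\varphi_{??i}]\!]^q_{v,u}(z)=(\iota_\varphi(z)-v_i)/u_i$; $[\![\varphi]\!]^q_{v,u}(z)=\infty$ if $\mathsf{sat}_\varphi(z)=1$ and $-\infty$ if $\mathsf{sat}_\varphi(z)=0$; $[\![Q_1\wedge Q_2]\!]^q_{v,u}(z)=\min\{[\![Q_1]\!]^q_{v,u}(z),[\![Q_2]\!]^q_{v,u}(z)\}$; $[\![Q_1\,;\,Q_2]\!]^q_{v,u}(z)=\max_{0\le k\le n}\min\{[\![Q_1]\!]^q_{v,u}(z_{0:k}),[\![Q_2]\!]^q_{v,u}(z_{k:n})\}$. For $x,y\in(\mathbb{R}\cup\{\pm\infty\})^d$, $\lfloor x,y\rceil=\{w\in\mathbb{R}^d:x_i<w_i\le y_i\ \forall i\}$. A boundary parameter of $z$ for $Q$ is $\theta\in\mathbb{R}^d\cup\{\bot,\top\}$ such that one of: (i) $\theta\in\mathbb{R}^d$, $[\![Q_\theta]\!](z)=1$, and $[\![Q_{\theta'}]\!](z)=0$ for all $\theta'\in\lfloor\theta,(\infty,\dots,\infty)\rceil$; (ii) $\theta=\bot$ and $[\![Q_{\theta'}]\!](z)=0$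 for all $\theta'\in\mathbb{R}^d$; (iii) $\theta=\top$ and $[\![Q_{\theta'}]\!](z)=1$ for all $\theta'\in\mathbb{R}^d$. *)

(* Defs.v *)
From HB Require Import structures.
From mathcomp Require Import all_boot all_order all_algebra.
From mathcomp Require Import all_classical all_reals ereal.
Set Implicit Arguments. Unset Strict Implicit. Unset Printing Implicit Defensive.
Import Order.TTheory GRing.Theory Num.Theory.
Local Open Scope ring_scope.
Local Open Scope ereal_scope.

Section Sketches.
Variables (X : Type) (R : realType) (d : nat).

(* Holes are labelled by 'I_d (label i+1 in the paper is i here).
   SPar i iota   : parametric predicate with scoring function iota and hole ??i
   SNon sat      : non-parametric predicate
   SSeq Q1 Q2    : Q1 ; Q2
   SPow k Q      : Q^k (k-fold sequencing, k >= 1 required by wf_sketch)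
   SAnd Q1 Q2    : Q1 /\ Q2 *)
Inductive sketch :=
| SPar of 'I_d & (seq X -> R)
| SNon of (seq X -> bool)
| SSeq of sketch & sketch
| SPow of nat & sketch
| SAnd of sketch & sketch.

Fixpoint wf_sketch (Q : sketch) : Prop :=
  match Q with
  | SPar _ iota => exists M : R, forall z, (`|iota z| <= M)%R
  | SNon _ => True
  | SSeq Q1 Q2 => wf_sketch Q1 /\ wf_sketch Q2
  | SPow k Q1 => (1 <= k)%N /\ wf_sketch Q1
  | SAnd Q1 Q2 => wf_sketch Q1 /\ wf_sketch Q2
  end.

Definition seqb (f g : seq X -> bool) (z : seq X) : bool :=
  [exists k : 'I_(size z).+1, f (take k z) && g (drop k z)].

Fixpoint bsem (Q : sketch) (theta : 'I_d -> R) (z : seq X) : bool :=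
  match Q with
  | SPar i iota => (theta i <= iota z)%R
  | SNon sat => sat z
  | SSeq Q1 Q2 => seqb (bsem Q1 theta) (bsem Q2 theta) z
  | SPow k Q1 => iter k.-1 (seqb (bsem Q1 theta)) (bsem Q1 theta) z
  | SAnd Q1 Q2 => bsem Q1 theta z && bsem Q2 theta z
  end.

Definition seqq (f g : seq X -> \bar R) (z : seq X) : \bar R :=
  \big[maxe/-oo]_(k < (size z).+1) mine (f (take k z)) (g (drop k z)).

Fixpoint qsem (Q : sketch) (v u : 'I_d -> R) (z : seq X) : \bar R :=
  match Q with
  | SPar i iota => ((iota z - v i) / u i)%:E
  | SNon sat => if sat z then +oo else -oo
  | SSeq Q1 Q2 => seqq (qsem Q1 v u) (qsem Q2 v u) z
  | SPow k Q1 => iter k.-1 (seqq (qsem Q1 v u)) (qsem Q1 v u) z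
  | SAnd Q1 Q2 => mine (qsem Q1 v u z) (qsem Q2 v u z)
  end.

Inductive bparam :=
| BReal of ('I_d -> R)
| BBot
| BTop.

Definition is_boundary (Q : sketch) (z : seq X) (b : bparam) : Prop :=
  match b with
  | BReal theta =>
      bsem Q theta z /\
      forall theta' : 'I_d -> R, (forall i, theta i < theta' i)%R -> ~~ bsem Q theta' z
  | BBot => forall theta' : 'I_d -> R, ~~ bsem Q theta' z
  | BTop => forall theta' : 'I_d -> R, bsem Q theta' z
  end.

Definition scale_shift (t : \bar R) (v u : 'I_d -> R) : bparam :=
  match t with
  | EFin r => BReal (fun i => (r * u i + v i)%R)
  | +oo => BTop
  | -oo => BBot
  end.

End Sketches.

(* Main.v *)
Require Import Defs.
From HB Require Import structures.
From mathcomp Require Import all_boot all_order all_algebra.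
From mathcomp Require Import all_classical all_reals ereal.
Import Order.TTheory GRing.Theory Num.Theory.
Local Open Scope ring_scope.

Section Aux.
Variables (X : Type) (R : realType) (d : nat).

Lemma seq_key (r : R) (f g : seq X -> bool) (F G : seq X -> \bar R)
  (hf : forall w, f w = (r%:E <= F w)%E) (hg : forall w, g w = (r%:E <= G w)%E)
  z : seqb f g z = (r%:E <= seqq F G z)%E.
Proof.
rewrite /seqb /seqq; apply/idP/idP.
- case/existsP => k /andP[a b].
  apply: (le_trans _ (le_bigmax _ _ k)).
  by rewrite le_min -hf -hg a b.
- move=> H; case: (boolP [exists k : 'I_(size z).+1, _]) => // /existsPn Hn.
  exfalso; move: H; rewrite leNgt => /negP; apply; apply/bigmax_ltP; split.
    exact: ltNyr.
  move=> k _; rewrite ltNge le_min -hf -hg; exact: Hn k.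
Qed.

Lemma seq_mono (f1 f2 g1 g2 : seq X -> bool)
  (hf : forall w, f2 w -> f1 w) (hg : forall w, g2 w -> g1 w) z :
  seqb f2 g2 z -> seqb f1 g1 z.
Proof.
case/existsP => k /andP[a b]; apply/existsP; exists k.
by rewrite hf ?hg.
Qed.

Lemma anti (Q : sketch X R d) (th1 th2 : 'I_d -> R) :
  (forall i, th1 i <= th2 i) -> forall z, bsem Q th2 z -> bsem Q th1 z.
Proof.
move=> Hth; elim: Q => [i iota|sat|Q1 IH1 Q2 IH2|k Q1 IH|Q1 IH1 Q2 IH2] z /=.
- exact: le_trans.
- by [].
- exact: seq_mono.
- elim: k.-1 z => [|n IHn] z /=; first exact: IH.
  exact: seq_mono.
- by case/andP => /IH1 -> /IH2 ->.
Qed.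

Lemma key (Q : sketch X R d) (r : R) (v u : 'I_d -> R)
  (hu : forall i, 0 < u i) z :
  bsem Q (fun i => r * u i + v i) z = (r%:E <= qsem Q v u z)%E.
Proof.
elim: Q z => [i iota|sat|Q1 IH1 Q2 IH2|k Q1 IH|Q1 IH1 Q2 IH2] z /=.
- by rewrite lee_fin ler_pdivlMr // lerBrDr.
- case: (sat z) => /=; first by rewrite leey.
  by rewrite leNgt ltNyr.
- exact: seq_key.
- elim: k.-1 z => [|n IHn] z /=; first exact: IH.
  exact: seq_key.
- by rewrite le_min IH1 IH2.
Qed.

End Aux.

Theorem theorem3 (X : Type) (R : realType) (d : nat) (Q : sketch X R d)
    (z : seq X) (v u : 'I_d -> R) :
  wf_sketch Q -> (forall i, 0 < u i) ->
  is_boundary Q z (scale_shift (qsem Q v u z) v u).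
Proof.
move=> _ hu.
case E: (qsem Q v u z) => [t| |] /=.
- split; first by rewrite key // E.
  move=> th' Hth'; apply/negP => Hb.
  set r' := \big[Num.min/(t + 1)]_i ((th' i - v i) / u i).
  have : bsem Q (fun i => r' * u i + v i) z.
    apply: anti Hb => i.
    rewrite -lerBrDr -ler_pdivlMr //; exact: bigmin_le.
  rewrite key // E lee_fin leNgt => /negP; apply.
  apply: lt_bigmin; first by rewrite ltrDl.
  move=> i _; rewrite ltr_pdivlMr // ltrBrDr; exact: Hth'.
- move=> th'.
  set r' := \big[Num.max/0]_i ((th' i - v i) / u i).
  apply: (@anti _ _ _ Q th' (fun i => r' * u i + v i)).
    move=> i; rewrite -lerBlDr -ler_pdivrMr //; exact: le_bigmax.
  by rewrite key // E leey.
- move=> th'; apply/negP => Hb.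
  set r' := \big[Num.min/0]_i ((th' i - v i) / u i).
  have : bsem Q (fun i => r' * u i + v i) z.
    apply: anti Hb => i.
    rewrite -lerBrDr -ler_pdivlMr //; exact: bigmin_le.
  by rewrite key // E leNgt ltNyr.
Qed.
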